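(* Let $S$ be a $\Gamma$-hemiring and let $\mu$ be a fuzzy h-ideal of $S$. Let $\beta\in(0,1]$ and $\alpha\in[0,1-\sup\{\mu(y):y\in S\}]$, and define $\mu_{\beta,\alpha}(y)=\beta\mu(y)+\alpha$ for $y\in S$. Then for every $x\in S$, $\langle x,\mu_{\beta,\alpha}\rangle$ is a fuzzy h-ideal of $S$.
   Context: A $\Gamma$-hemiring is a pair of additive commutative semigroups with zero $S$ and $\Gamma$ with a map $S\times\Gamma\times S\to S$, $(a,\alpha,b)\mapsto a\alpha b$, such that for all $a,b,c\in S$, $\alpha,\beta\in\Gamma$: $(a+b)\alpha c=a\alpha c+b\alpha c$; $a\alpha(b+c)=a\alpha b+a\alpha c$; $a(\alpha+\beta)b=a\alpha b+a\beta b$; $a\alpha(b\beta c)=(a\alpha b)\beta c$; $0\alpha a=0=a\alpha0$; $a0b=0=b0a$. A fuzzy h-ideal of $S$ is a map $\mu:S\to[0,1]$, not identically $0$, such that for all $x,y,a,b,z\in S$, $\gamma\in\Gamma$: $\mu(x+y)\ge\min\{\mu(x),\mu(y)\}$; $\mu(x\gamma y)\ge\mu(x)$ and $\mu(x\gamma y)\ge\mu(y)$; $x+a+z=b+z$ implies $\mu(x)\ge\min\{\mu(a),\mu(b)\}$. The extension of a fuzzy subset $\mu$ by $x$ is $\langle x,\mu\rangle(y)=\inf_{s\in S,\ \alpha,\gamma\in\Gamma}\mu(x\alpha s\gamma y)$ (here $\alpha,\gamma$ are bound variables ranging over $\Gamma$, unrelated to the real number $\alpha$ above). *)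

(* Defs.v *)
From HB Require Import structures.
From mathcomp Require Import all_boot all_order all_algebra.
From mathcomp Require Import all_classical all_reals.
Set Implicit Arguments. Unset Strict Implicit. Unset Printing Implicit Defensive.
Import Order.TTheory GRing.Theory Num.Theory.
Local Open Scope classical_set_scope.
Local Open Scope ring_scope.

Record GammaHemiring := {
  S_car : Type;
  G_car : Type;
  sadd : S_car -> S_car -> S_car;
  szero : S_car;
  gadd : G_car -> G_car -> G_car;
  gzero : G_car;
  tmul : S_car -> G_car -> S_car -> S_car;
  saddA : forall a b c, sadd a (sadd b c) = sadd (sadd a b) c;
  saddC : forall a b, sadd a b = sadd b a;
  sadd0 : forall a, sadd szero a = a;
  gaddA : forall a b c, gadd a (gadd b c) = gadd (gadd a b) c;
  gaddC : forall a b, gadd a b = gadd b a;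
  gadd0 : forall a, gadd gzero a = a;
  tmulDl : forall a b c al, tmul (sadd a b) al c = sadd (tmul a al c) (tmul b al c);
  tmulDr : forall a b c al, tmul a al (sadd b c) = sadd (tmul a al b) (tmul a al c);
  tmulDm : forall a b al be, tmul a (gadd al be) b = sadd (tmul a al b) (tmul a be b);
  tmulA : forall a b c al be, tmul a al (tmul b be c) = tmul (tmul a al b) be c;
  tmul0l : forall a al, tmul szero al a = szero;
  tmul0r : forall a al, tmul a al szero = szero;
  tmul0m : forall a b, tmul a gzero b = szero /\ tmul b gzero a = szero
}.

Definition fuzzy_h_ideal (R : realType) (H : GammaHemiring) (mu : S_car H -> R) : Prop :=
  (forall x, 0 <= mu x <= 1) /\
  (exists x, mu x != 0) /\
  (forall x y, mu (sadd x y) >= Order.min (mu x) (mu y)) /\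
  (forall x y (g : G_car H), mu (tmul x g y) >= mu x /\ mu (tmul x g y) >= mu y) /\
  (forall x a b z, sadd (sadd x a) z = sadd b z -> mu x >= Order.min (mu a) (mu b)).

Definition extension (R : realType) (H : GammaHemiring) (x : S_car H)
  (mu : S_car H -> R) : S_car H -> R :=
  fun y => inf [set v : R | exists (s : S_car H) (a g : G_car H),
                     v = mu (tmul (tmul x a s) g y)].

(* Main.v *)
Require Import Defs.
From mathcomp Require Import all_boot all_order all_algebra.
From mathcomp Require Import all_classical all_reals.
From mathcomp Require Import lra.
Import Order.TTheory GRing.Theory Num.Theory.
Local Open Scope classical_set_scope.
Local Open Scope ring_scope.

Section Aux.
Variables (R : realType) (H : GammaHemiring) (x : S_car H) (nu : S_car H -> R).
Hypothesis nu0 : forall y, 0 <= nu y.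

Let E y := [set v : R | exists (s : S_car H) (a g : G_car H),
                     v = nu (tmul (tmul x a s) g y)].

Lemma ext_le y s a g : extension x nu y <= nu (tmul (tmul x a s) g y).
Proof.
apply: (ge_inf (E := E y)); last by exists s, a, g.
by exists 0 => v [s' [a' [g' ->]]].
Qed.

Lemma ext_ge y m : (forall s a g, m <= nu (tmul (tmul x a s) g y)) ->
  m <= extension x nu y.
Proof.
move=> Hm; apply: lb_le_inf.
  by exists (nu (tmul (tmul x (gzero H) (szero H)) (gzero H) y)), (szero H), (gzero H), (gzero H).
by move=> v [s [a [g ->]]].
Qed.
End Aux.

Theorem proposition3p13 (R : realType) (H : GammaHemiring) (mu : S_car H -> R)
  (beta alpha : R) :
  fuzzy_h_ideal mu ->
  0 < beta <= 1 ->
  0 <= alpha <= 1 - sup (range mu) ->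
  forall x : S_car H,
    fuzzy_h_ideal (extension x (fun y => beta * mu y + alpha)).
Proof.
move=> [Hb [[y0 Hy0] [Hadd [Hmul Hh]]]] /andP[b0 b1] /andP[a0 a1] x.
set nu := fun y => beta * mu y + alpha.
have mus y : mu y <= sup (range mu).
  apply: ub_le_sup; last by exists y.
  by exists 1 => v [z _ <-]; case/andP: (Hb z).
have nu0 y : 0 <= nu y.
  rewrite /nu; case/andP: (Hb y) => h1 h2; nra.
have nu1 y : nu y <= 1.
  rewrite /nu; case/andP: (Hb y) => h1 h2; have := mus y; nra.
have numon p q : mu p <= mu q -> nu p <= nu q.
  by move=> h; rewrite /nu lerD2r ler_pM2l.
have numin u a b : Order.min (mu a) (mu b) <= mu u ->
    Order.min (nu a) (nu b) <= nu u.
  rewrite !ge_min => /orP[h|h]; apply/orP; [left|right]; exact: numon.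
split.
  move=> y; apply/andP; split.
    by apply: ext_ge => //.
  apply: le_trans (nu1 (tmul (tmul x (gzero H) (szero H)) (gzero H) y)).
  exact: ext_le.
split.
  exists y0; apply/negP => /eqP Heq.
  have : nu y0 <= extension x nu y0.
    apply: ext_ge => // s a g; apply: numon; exact: (Hmul _ y0 g).2.
  rewrite Heq /nu.
  have : 0 < mu y0 by rewrite lt_def Hy0; case/andP: (Hb y0).
  move=> hp; nra.
split.
  move=> y z; apply: ext_ge => // s a g.
  rewrite tmulDr.
  apply: le_trans (numin _ _ _ (Hadd _ _)).
  rewrite le_min !ge_min; apply/andP; split; apply/orP; [left|right];
    exact: ext_le.
split.
  move=> y z g; split; apply: ext_ge => // s a h.
    rewrite tmulA; apply: le_trans (numon _ _ (Hmul _ _ g).1).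
    exact: ext_le.
  rewrite tmulA -(tmulA x); exact: ext_le.
move=> y a b z Heq; apply: ext_ge => // s al g.
set X := tmul x al s.
have Heq' : sadd (sadd (tmul X g y) (tmul X g a)) (tmul X g z) =
            sadd (tmul X g b) (tmul X g z).
  by rewrite -!tmulDr Heq.
apply: le_trans (numin _ _ _ (Hh _ _ _ _ Heq')).
rewrite le_min !ge_min; apply/andP; split; apply/orP; [left|right];
  exact: ext_le.
Qed.
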